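(* Consider the binary integer program \[\text{(P)}\qquad\min_{x\in\{0,1\}^n}\ \langle x,Qx\rangle+\langle c,x\rangle\quad\text{s.t. } Ax\ge b,\ Bx=d,\] with $Q\in\mathbb R^{n\times n}$ symmetric, $c\in\mathbb R^n$, $A\in\mathbb R^{m_1\times n}$, $b\in\mathbb R^{m_1}$, $B\in\mathbb R^{m_2\times n}$, $d\in\mathbb R^{m_2}$. Let $J\subseteq[m_2]$ be a row index set and $I\subseteq[n]$ a column index set, with complements $\bar J$, $\bar I$, such that $B_J$ and $d_J$ are integral, $B_J$ is totally unimodular, and $B_{JI}$ is invertible. Define $s:=B_{JI}^{-1}d_J$ and $S:=-B_{JI}^{-1}B_{J\bar I}$, and \[Q':=S^\top Q_{II}S+S^\top Q_{I\bar I}+Q_{I\bar I}^\top S+Q_{\bar I\bar I},\quad A':=A_{\cdot I}S+A_{\cdot\bar I},\quad B':=B_{\bar JI}S+B_{\bar J\bar I},\quad b':=b-A_{\cdot I}s,\] \[c':=2S^\top Q_{II}s+2Q_{I\bar I}^\top s+S^\top c_I+c_{\bar I},\quad d':=d_{\bar J}-B_{\bar JI}s,\quad c_0':=\langle s,Q_{II}s\rangle+\langle c_I,s\rangle.\] Then the problem \[\text{(P')}\qquad\min_{x_{\bar I}\in\{0,1\}^{n-|I|}}\ \langle x_{\bar I},Q'x_{\bar I}\rangle+\langle c',x_{\bar I}\rangle+c_0'\quad\text{s.t. } A'x_{\bar I}\ge b',\ B'x_{\bar I}=d',\ Sx_{\bar I}\ge-s,\ Sx_{\bar I}\le\mathbf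 1-s\] is an exact reformulation of (P): the map $x_{\bar I}\mapsto x$ with $x_I:=s+Sx_{\bar I}$ is a bijection from the feasible set of (P') onto the feasible set of (P) that preserves objective values; in particular (P) and (P') have the same optimal value and optimal solutions correspond under this map.
   Context: For index sets, $B_J$ denotes the rows of $B$ indexed by $J$, $B_{JI}$ the submatrix with rows $J$ and columns $I$, $A_{\cdot I}$ the columns of $A$ indexed by $I$, $Q_{II},Q_{I\bar I},Q_{\bar I\bar I}$ the corresponding blocks of $Q$, and $x_I$, $c_I$, $d_J$ the subvectors. A matrix is totally unimodular if every square submatrix has determinant in $\{-1,0,1\}$. $\mathbf 1$ is the all-ones vector; $[m]=\{1,\dots,m\}$. *)

(* Defs.v *)
From HB Require Import structures.
From mathcomp Require Import all_boot all_order all_algebra.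
Set Implicit Arguments. Unset Strict Implicit. Unset Printing Implicit Defensive.
Import Order.TTheory GRing.Theory Num.Theory.
Local Open Scope ring_scope.

(* Enumeration of an index set I ⊆ [n] (in increasing order). *)
Definition idx (n : nat) (I : {set 'I_n}) : 'I_#|I| -> 'I_n := fun k => enum_val k.

Definition rowsJ (R : Type) m n (J : {set 'I_m}) (M : 'M[R]_(m, n)) : 'M[R]_(#|J|, n) :=
  rowsub (@idx m J) M.
Definition colsI (R : Type) m n (I : {set 'I_n}) (M : 'M[R]_(m, n)) : 'M[R]_(m, #|I|) :=
  colsub (@idx n I) M.
Definition blockJI (R : Type) m n (J : {set 'I_m}) (I : {set 'I_n}) (M : 'M[R]_(m, n))
  : 'M[R]_(#|J|, #|I|) := mxsub (@idx m J) (@idx n I) M.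

Definition mxle (R : numDomainType) m n (u v : 'M[R]_(m, n)) : Prop :=
  forall i j, u i j <= v i j.

Definition binary (R : numDomainType) n (x : 'cV[R]_n) : Prop :=
  forall i, x i 0 = 0 \/ x i 0 = 1.

Definition integral_mx (R : numDomainType) m n (M : 'M[R]_(m, n)) : Prop :=
  forall i j, exists z : int, M i j = z%:~R.

Definition totally_unimodular (R : numDomainType) m n (M : 'M[R]_(m, n)) : Prop :=
  forall k (f : 'I_k -> 'I_m) (g : 'I_k -> 'I_n), injective f -> injective g ->
    let D := \det (mxsub f g M) in D = -1 \/ D = 0 \/ D = 1.

(* The vector x ∈ R^n with x_I = u and x_{Ī} = v. *)
Definition assemble (R : numDomainType) n (I : {set 'I_n})
  (u : 'cV[R]_#|I|) (v : 'cV[R]_#|~: I|) : 'cV[R]_n :=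
  \col_j (match [pick k | @idx n I k == j], [pick k | @idx n (~: I) k == j] with
          | Some k, _ => u k 0
          | None, Some k => v k 0
          | None, None => 0
          end).

Definition is_opt (R : numDomainType) (X : Type) (feas : X -> Prop) (obj : X -> R) (x : X)
  : Prop := feas x /\ forall x', feas x' -> obj x <= obj x'.

(* Main.v *)
Require Import Defs.
From HB Require Import structures.
From mathcomp Require Import all_boot all_order all_algebra.
From mathcomp Require Import zify ring lra.
Import Order.TTheory GRing.Theory Num.Theory.
Local Open Scope ring_scope.

Lemma idx_cover n (I : {set 'I_n}) (i : 'I_n) :
  (exists k, @idx n I k = i) \/ (exists k, @idx n (~: I) k = i).
Proof.
case: (boolP (i \in I)) => Hi.
  by left; exists (enum_rank_in Hi i); rewrite /idx enum_rankK_in.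
have Hi' : i \in ~: I by rewrite in_setC.
by right; exists (enum_rank_in Hi' i); rewrite /idx enum_rankK_in.
Qed.

Lemma idx_in n (I : {set 'I_n}) (k : 'I_#|I|) : @idx n I k \in I.
Proof. exact: enum_valP. Qed.

Lemma idx_inj n (I : {set 'I_n}) : injective (@idx n I).
Proof. exact: enum_val_inj. Qed.

Lemma idx_disj n (I : {set 'I_n}) k l : @idx n I k <> @idx n (~: I) l.
Proof. move=> E; have := @idx_in _ _ l; by rewrite in_setC -E idx_in. Qed.

Lemma mul_split (R : comPzRingType) p n q (I : {set 'I_n}) (M : 'M[R]_(p,n)) (N : 'M[R]_(n,q)) :
  M *m N = colsI I M *m rowsJ I N + colsI (~: I) M *m rowsJ (~: I) N.
Proof.
apply/matrixP => i k; rewrite !mxE (bigID (fun j => j \in I)) /=; congr (_ + _).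
  rewrite big_enum_val; apply: eq_bigr => a _; by rewrite !mxE.
rewrite (eq_bigl (fun j => j \in ~: I)); last by move=> j; rewrite in_setC.
rewrite big_enum_val; apply: eq_bigr => a _; by rewrite !mxE.
Qed.

Lemma colsI_mul (R : comPzRingType) p n q (I : {set 'I_q}) (M : 'M[R]_(p,n)) (N : 'M[R]_(n,q)) :
  colsI I (M *m N) = M *m colsI I N.
Proof. apply/matrixP => i k; rewrite !mxE; apply: eq_bigr => a _; by rewrite !mxE. Qed.

Lemma rowsJ_mul (R : comPzRingType) p n q (I : {set 'I_p}) (M : 'M[R]_(p,n)) (N : 'M[R]_(n,q)) :
  rowsJ I (M *m N) = rowsJ I M *m N.
Proof. apply/matrixP => i k; rewrite !mxE; apply: eq_bigr => a _; by rewrite !mxE. Qed.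

Lemma rowsJ_tr (R : Type) p n (I : {set 'I_p}) (M : 'M[R]_(p,n)) :
  (rowsJ I M)^T = colsI I M^T.
Proof. by apply/matrixP => i k; rewrite !mxE. Qed.

Lemma colsI_tr (R : Type) p n (I : {set 'I_n}) (M : 'M[R]_(p,n)) :
  (colsI I M)^T = rowsJ I M^T.
Proof. by apply/matrixP => i k; rewrite !mxE. Qed.

Lemma colsI_rowsJ (R : Type) p n (J : {set 'I_p}) (I : {set 'I_n}) (M : 'M[R]_(p,n)) :
  colsI I (rowsJ J M) = blockJI J I M.
Proof. by apply/matrixP => i k; rewrite !mxE. Qed.

Lemma rowsJ_colsI (R : Type) p n (J : {set 'I_p}) (I : {set 'I_n}) (M : 'M[R]_(p,n)) :
  rowsJ J (colsI I M) = blockJI J I M.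
Proof. by apply/matrixP => i k; rewrite !mxE. Qed.

Lemma blockJI_tr (R : Type) p n (J : {set 'I_p}) (I : {set 'I_n}) (M : 'M[R]_(p,n)) :
  (blockJI J I M)^T = blockJI I J M^T.
Proof. by apply/matrixP => i k; rewrite !mxE. Qed.

Lemma rowsJD (R : comPzRingType) p n (J : {set 'I_p}) (M N : 'M[R]_(p,n)) :
  rowsJ J (M + N) = rowsJ J M + rowsJ J N.
Proof. by apply/matrixP => i k; rewrite !mxE. Qed.

Lemma colsID (R : comPzRingType) p n (J : {set 'I_n}) (M N : 'M[R]_(p,n)) :
  colsI J (M + N) = colsI J M + colsI J N.
Proof. by apply/matrixP => i k; rewrite !mxE. Qed.

Lemma rowsJ_eq (R : Type) p n (J : {set 'I_p}) (M N : 'M[R]_(p,n)) :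
  rowsJ J M = rowsJ J N -> rowsJ (~: J) M = rowsJ (~: J) N -> M = N.
Proof.
move=> /matrixP H1 /matrixP H2; apply/matrixP => i j.
case: (idx_cover _ J i) => [[k <-]|[k <-]].
  by have := H1 k j; rewrite !mxE.
by have := H2 k j; rewrite !mxE.
Qed.

Lemma assemble_I (R : numDomainType) n (I : {set 'I_n}) u v :
  rowsJ I (@assemble R n I u v) = u.
Proof.
apply/matrixP => k j; rewrite !mxE (ord1 j).
case: pickP => [k' /eqP /idx_inj -> //|H].
by have := H k; rewrite eqxx.
Qed.

Lemma assemble_Ib (R : numDomainType) n (I : {set 'I_n}) u v :
  rowsJ (~: I) (@assemble R n I u v) = v.
Proof.
apply/matrixP => k j; rewrite !mxE (ord1 j).
case: pickP => [k' /eqP E|_]; first by exfalso; exact: (idx_disj _ _ _ _ E).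
case: pickP => [k' /eqP /idx_inj -> //|H].
by have := H k; rewrite eqxx.
Qed.

Lemma assembleE (R : numDomainType) n (I : {set 'I_n}) (x : 'cV[R]_n) :
  x = @assemble _ _ I (rowsJ I x) (rowsJ (~: I) x).
Proof. by apply: (rowsJ_eq _ _ _ I); rewrite ?assemble_I ?assemble_Ib. Qed.

Definition intmx (R : realFieldType) m n (M : 'M[R]_(m,n)) :=
  exists Mz : 'M[int]_(m,n), M = map_mx intr Mz.
Arguments intmx {R m n}.

Lemma integral_intmx (R : realFieldType) m n (M : 'M[R]_(m,n)) :
  integral_mx M -> intmx M.
Proof.
move=> H.
have H' : forall i j, exists z : int, M i j == z%:~R.
  by move=> i j; case: (H i j) => z ->; exists z.
exists (\matrix_(i, j) xchoose (H' i j)).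
apply/matrixP => i j; rewrite !mxE; exact/eqP/(xchooseP (H' i j)).
Qed.

Lemma intmxM (R : realFieldType) m n p (M : 'M[R]_(m,n)) (N : 'M[R]_(n,p)) :
  intmx M -> intmx N -> intmx (M *m N).
Proof. by case=> Mz -> [Nz ->]; exists (Mz *m Nz); rewrite map_mxM. Qed.

Lemma intmxD (R : realFieldType) m n (M N : 'M[R]_(m,n)) :
  intmx M -> intmx N -> intmx (M + N).
Proof. by case=> Mz -> [Nz ->]; exists (Mz + Nz); rewrite map_mxD. Qed.

Lemma intmxN (R : realFieldType) m n (M : 'M[R]_(m,n)) :
  intmx M -> intmx (- M).
Proof. by case=> Mz ->; exists (- Mz); rewrite map_mxN. Qed.

Lemma binary_intmx (R : realFieldType) n (y : 'cV[R]_n) : binary y -> intmx y.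
Proof.
move=> H; apply: integral_intmx => i j; rewrite (ord1 j).
by case: (H i) => ->; [exists 0 | exists 1].
Qed.

Lemma int01 (R : realFieldType) (x : R) (z : int) :
  x = z%:~R -> 0 <= x -> x <= 1 -> x = 0 \/ x = 1.
Proof.
move=> -> H0 H1.
have Ha : (0 <= z)%R by rewrite -(ler0z R).
have Hb : (z <= 1)%R by rewrite -(ler_int R); exact: H1.
have : (z = 0 \/ z = 1)%R by lia.
by case=> ->; [left|right].
Qed.

Lemma inv_intmx (R : realFieldType) k1 k2 (M : 'M[R]_(k1,k2)) (N : 'M[R]_(k2,k1)) :
  intmx M -> totally_unimodular M -> N *m M = 1%:M -> M *m N = 1%:M -> intmx N.
Proof.
move=> HM TU HNM HMN.
have e : k2 = k1.
  apply/eqP; rewrite eqn_leq; apply/andP; split.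
    rewrite -{1}(mxrank1 R k2) -HNM.
    exact: leq_trans (mxrankM_maxr _ _) (rank_leq_row _).
  rewrite -{1}(mxrank1 R k1) -HMN.
  exact: leq_trans (mxrankM_maxr _ _) (rank_leq_row N).
subst k2.
have Hd := TU k1 id id (@inj_id _) (@inj_id _); simpl in Hd.
rewrite (_ : mxsub id id M = M) in Hd; last by apply/matrixP => i j; rewrite mxE.
have Hd0 : \det M != 0.
  apply/eqP => H0; have := congr1 determinant HMN.
  by rewrite det_mulmx H0 mul0r det1 => /eqP; rewrite eq_sym oner_eq0.
have Hu : M \in unitmx.
  rewrite unitmxE; case: Hd => [->|[H0|->]]; rewrite ?unitrN ?unitr1 //.
  by rewrite H0 eqxx in Hd0.
have -> : N = invmx M by rewrite -[N]mulmx1 -(mulmxV Hu) mulmxA HNM mul1mx.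
rewrite /invmx Hu; case: HM Hd Hd0 => Mz -> Hd Hd0.
rewrite -map_mx_adj.
case: Hd => [->|[H0|->]]; last first.
- by exists (\adj Mz); rewrite invr1 scale1r.
- by rewrite H0 eqxx in Hd0.
- by exists (- \adj Mz); rewrite invrN1 scaleN1r map_mxN.
Qed.

Lemma addE (R : numDomainType) m n (M N : 'M[R]_(m,n)) i j : (M + N) i j = M i j + N i j.
Proof. by rewrite mxE. Qed.
Lemma oppE (R : numDomainType) m n (M : 'M[R]_(m,n)) i j : (- M) i j = - M i j.
Proof. by rewrite mxE. Qed.
Lemma mulrnE (R : numDomainType) m n (M : 'M[R]_(m,n)) i j k : (M *+ k) i j = M i j *+ k.
Proof. by elim: k => [|k IH]; rewrite ?mulr0n ?mxE // !mulrS mxE IH. Qed.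
Lemma constE (R : numDomainType) m n (a : R) i j : (const_mx a : 'M[R]_(m,n)) i j = a.
Proof. by rewrite mxE. Qed.
Lemma trD (R : numDomainType) m n (M N : 'M[R]_(m,n)) : (M + N)^T = M^T + N^T.
Proof. by apply/matrixP => i j; rewrite !mxE. Qed.
Lemma trN (R : numDomainType) m n (M : 'M[R]_(m,n)) : (- M)^T = - M^T.
Proof. by apply/matrixP => i j; rewrite !mxE. Qed.
Lemma trMn (R : numDomainType) m n (M : 'M[R]_(m,n)) k : (M *+ k)^T = M^T *+ k.
Proof. by apply/matrixP => i j; rewrite mxE !mulrnE mxE. Qed.
Lemma trE11 (R : numDomainType) (M : 'M[R]_1) : M 0 0 = M^T 0 0.
Proof. by rewrite mxE. Qed.

Lemma tu_block (R : numDomainType) m n (J : {set 'I_m}) (I : {set 'I_n}) (B : 'M[R]_(m,n)) :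
  totally_unimodular (rowsJ J B) -> totally_unimodular (blockJI J I B).
Proof.
move=> TU k f g Hf Hg.
have := TU k f (fun i => @idx n I (g i)) Hf (inj_comp (@idx_inj n I) Hg).
rewrite (_ : mxsub f _ (rowsJ J B) = mxsub f g (blockJI J I B)) //.
by apply/matrixP => i j; rewrite !mxE.
Qed.

Lemma integral_block (R : numDomainType) m n (J : {set 'I_m}) (I : {set 'I_n}) (B : 'M[R]_(m,n)) :
  integral_mx (rowsJ J B) -> integral_mx (blockJI J I B).
Proof. by move=> H i j; case: (H i (@idx n I j)) => z Hz; exists z; rewrite -Hz !mxE. Qed.

Lemma integral_rowsJ (R : numDomainType) m n (J : {set 'I_m}) (I : {set 'I_n}) (B : 'M[R]_(m,n)) :
  integral_mx (rowsJ J B) -> integral_mx (blockJI J I B).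
Proof. by move=> H i j; case: (H i (@idx n I j)) => z Hz; exists z; rewrite -Hz !mxE. Qed.

Lemma rowsJ_E (R : Type) p n (J : {set 'I_p}) (M : 'M[R]_(p,n)) k j :
  rowsJ J M k j = M (@idx p J k) j.
Proof. by rewrite /rowsJ mxE. Qed.

Theorem mainTheorem8 (R : realFieldType) (n m1 m2 : nat)
  (Q : 'M[R]_n) (c : 'cV[R]_n) (A : 'M[R]_(m1, n)) (b : 'cV[R]_m1)
  (B : 'M[R]_(m2, n)) (d : 'cV[R]_m2)
  (J : {set 'I_m2}) (I : {set 'I_n}) (BJIinv : 'M[R]_(#|I|, #|J|)) :
  Q^T = Q ->
  integral_mx (rowsJ J B) -> integral_mx (rowsJ J d) ->
  totally_unimodular (rowsJ J B) ->
  (* B_{JI} is invertible, with inverse BJIinv *)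
  BJIinv *m blockJI J I B = 1%:M -> blockJI J I B *m BJIinv = 1%:M ->
  let Ib := ~: I in let Jb := ~: J in
  let s := BJIinv *m rowsJ J d in
  let S := - (BJIinv *m blockJI J Ib B) in
  let QII := blockJI I I Q in let QIIb := blockJI I Ib Q in let QIbIb := blockJI Ib Ib Q in
  let Q' := S^T *m QII *m S + S^T *m QIIb + QIIb^T *m S + QIbIb in
  let A' := colsI I A *m S + colsI Ib A in
  let B' := blockJI Jb I B *m S + blockJI Jb Ib B in
  let b' := b - colsI I A *m s in
  let c' := (S^T *m QII *m s) *+ 2 + (QIIb^T *m s) *+ 2 + S^T *m rowsJ I c + rowsJ Ib c in
  let d' := rowsJ Jb d - blockJI Jb I B *m s in
  let c0' := (s^T *m QII *m s) 0 0 + ((rowsJ I c)^T *m s) 0 0 in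
  (* problem (P) *)
  let feasP := fun x : 'cV[R]_n => binary x /\ mxle b (A *m x) /\ B *m x = d in
  let objP := fun x : 'cV[R]_n => (x^T *m Q *m x) 0 0 + (c^T *m x) 0 0 in
  (* problem (P') *)
  let feasP' := fun y : 'cV[R]_#|Ib| =>
    [/\ binary y, mxle b' (A' *m y), B' *m y = d',
        mxle (- s) (S *m y) & mxle (S *m y) (const_mx 1 - s)] in
  let objP' := fun y : 'cV[R]_#|Ib| => (y^T *m Q' *m y) 0 0 + (c'^T *m y) 0 0 + c0' in
  (* the map x_Ī ↦ x with x_I := s + S x_Ī *)
  let lift := fun y : 'cV[R]_#|Ib| => @assemble R n I (s + S *m y) y in
  [/\ (forall y, feasP' y -> feasP (lift y)),
      (forall y, feasP' y -> objP (lift y) = objP' y),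
      (forall y1 y2, feasP' y1 -> feasP' y2 -> lift y1 = lift y2 -> y1 = y2),
      (forall x, feasP x -> exists2 y, feasP' y & lift y = x)
    & (forall y, feasP' y -> (is_opt feasP' objP' y <-> is_opt feasP objP (lift y)))].
Proof.
move=> HQ HBi Hdi HTU Hi1 Hi2 Ib Jb s S QII QIIb QIbIb Q' A' B' b' c' d' c0'
  feasP objP feasP' objP' lift.
have liftI : forall y, rowsJ I (lift y) = s + S *m y by move=> y; exact: assemble_I.
have liftIb : forall y, rowsJ Ib (lift y) = y by move=> y; exact: assemble_Ib.
have splitx : forall p (M : 'M[R]_(p,n)) (x : 'cV[R]_n),
    M *m x = colsI I M *m rowsJ I x + colsI Ib M *m rowsJ Ib x.
  by move=> *; exact: mul_split.
have BJ : forall y, rowsJ J (B *m lift y) = rowsJ J d.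
  move=> y; rewrite rowsJ_mul splitx liftI liftIb !colsI_rowsJ /s /S.
  by rewrite mulmxDr mulNmx mulmxN !mulmxA Hi2 !mul1mx subrK.
have hA : forall y, A *m lift y = colsI I A *m s + A' *m y.
  by move=> y; rewrite splitx liftI liftIb /A' mulmxDr mulmxDl -addrA -mulmxA.
have hBb : forall y, rowsJ Jb (B *m lift y) = blockJI Jb I B *m s + B' *m y.
  move=> y; rewrite rowsJ_mul splitx liftI liftIb !colsI_rowsJ /B'.
  by rewrite mulmxDr mulmxDl -addrA -mulmxA.
have feasA : forall y, mxle b (A *m lift y) <-> mxle b' (A' *m y).
  move=> y; rewrite hA /b'; split => H i j; have := H i j;
  rewrite ?addE ?oppE; lra.
have feasB : forall y, B *m lift y = d <-> B' *m y = d'.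
  move=> y; split.
    move=> H; have := congr1 (rowsJ Jb) H; rewrite hBb /d' => <-.
    by rewrite addrAC subrr add0r.
  move=> H; apply: (rowsJ_eq _ _ _ J); first exact: BJ.
  by rewrite hBb H /d' addrC subrK.
have intS : forall y, binary y -> intmx (s + S *m y).
  move=> y Hy.
  have -> : s + S *m y = BJIinv *m (rowsJ J d + - (blockJI J Ib B *m y)).
    by rewrite /s /S mulmxDr mulmxN mulNmx mulmxA.
  apply: intmxM.
    apply: (@inv_intmx _ _ _ (blockJI J I B)) => //.
      exact/integral_intmx/integral_block.
    exact: tu_block.
  apply: intmxD; first exact: integral_intmx.
  apply: intmxN; apply: intmxM; last exact: binary_intmx.
  exact/integral_intmx/integral_block.
have part1 : forall y, feasP' y -> feasP (lift y).
  move=> y [Hy HA HB Hlo Hhi]; split; last split.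
  - move=> i; case: (idx_cover _ I i) => [[k <-]|[k <-]].
      have E : lift y (@idx n I k) 0 = (s + S *m y) k 0 by rewrite -liftI rowsJ_E.
      case: (intS y Hy) => z Ez.
      have l1 := Hlo k 0; have l2 := Hhi k 0.
      rewrite ?addE ?oppE ?constE in l1 l2.
      apply: (int01 _ _ (z k 0)); rewrite E; [by rewrite Ez mxE | rewrite addE; lra | rewrite addE; lra].
    have E : lift y (@idx n (~: I) k) 0 = y k 0 by rewrite -{2}(liftIb y) rowsJ_E.
    by rewrite E; exact: Hy.
  - exact/feasA.
  - exact/feasB.
have part3 : forall y1 y2, lift y1 = lift y2 -> y1 = y2.
  by move=> y1 y2 E; rewrite -(liftIb y1) E liftIb.
have part4 : forall x, feasP x -> exists2 y, feasP' y & lift y = x.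
  move=> x [Hx [HA HB]].
  set y := rowsJ Ib x.
  have xI : rowsJ I x = s + S *m y.
    have HJ := congr1 (rowsJ J) HB.
    rewrite rowsJ_mul splitx !colsI_rowsJ in HJ.
    rewrite /s /S -HJ mulmxDr mulNmx !mulmxA Hi1 mul1mx addrK //.
  have Ex : lift y = x by rewrite /lift -xI; symmetry; exact: assembleE.
  exists y => //.
  have Hb : forall k, 0 <= (s + S *m y) k 0 <= 1.
    move=> k; rewrite -xI rowsJ_E; case: (Hx (@idx n I k)) => ->; lra.
  split.
  - by move=> k; rewrite /y rowsJ_E; exact: Hx.
  - by apply/feasA; rewrite Ex.
  - by apply/feasB; rewrite Ex.
  - move=> k j; rewrite (ord1 j); have := Hb k; rewrite addE oppE; lra.
  - move=> k j; rewrite (ord1 j); have := Hb k; rewrite addE addE oppE constE; lra.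
have hQII : QII^T = QII by rewrite /QII blockJI_tr HQ.
have hQIbI : blockJI Ib I Q = QIIb^T by rewrite /QIIb blockJI_tr HQ.
have part2 : forall y, objP (lift y) = objP' y.
  move=> y; rewrite /objP /objP' /Q' /c' /c0'.
  have E1 : (lift y)^T *m Q *m lift y =
     (rowsJ I (lift y))^T *m (QII *m rowsJ I (lift y) + QIIb *m y)
     + y^T *m (QIIb^T *m rowsJ I (lift y) + QIbIb *m y).
    rewrite -mulmxA (splitx _ (lift y)^T) -!rowsJ_tr !rowsJ_mul.
    rewrite (splitx _ (rowsJ I Q)) (splitx _ (rowsJ Ib Q)) !colsI_rowsJ liftIb hQIbI.
    by [].

  have E2 : c^T *m lift y = (rowsJ I c)^T *m rowsJ I (lift y) + (rowsJ Ib c)^T *m y.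
    by rewrite (splitx _ c^T) -!rowsJ_tr liftIb.
  rewrite E1 E2 liftI.
  clearbody s S QIIb QIbIb; move: hQII; clearbody QII => hQII.
  rewrite !mulr2n !trD !trmx_mul !trmxK !mulmxDl !mulmxDr !mulmxA.
  rewrite !mulmxDl ?mulmxA !addE ?hQII.
  have e1 : (y^T *m S^T *m QII *m s) 0 0 = (s^T *m QII *m S *m y) 0 0.
    by rewrite [LHS]trE11 !trmx_mul !trmxK hQII !mulmxA.
  have e2 : (y^T *m QIIb^T *m s) 0 0 = (s^T *m QIIb *m y) 0 0.
    by rewrite [LHS]trE11 !trmx_mul !trmxK !mulmxA.
  rewrite e1 e2; lra.
split; [exact: part1 | by move=> y _; exact: part2
  | by move=> y1 y2 _ _; exact: part3 | exact: part4 | ].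
move=> y Hy; split.
- move=> [_ Hopt]; split; first exact: part1.
  move=> x' Hx'; case: (part4 x' Hx') => y' Hy' <-.
  by rewrite !part2; exact: Hopt.
- move=> [_ Hopt]; split => // y' Hy'.
  by rewrite -!part2; apply: Hopt; exact: part1.
Qed.
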